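(* Let $\mathcal{T}\in\mathbb{K}^{R\times R\times K}$ be slice mix invertible, and let $\{(\mathscr{L}_j,\mathbf{x}_j)\}_{j=1}^\ell$ be JGE pairs of $\mathcal{T}$ with $\mathscr{L}_1,\dots,\mathscr{L}_\ell$ pairwise distinct. Then $\{\mathbf{x}_j\}_{j=1}^\ell$ is linearly independent. Consequently, if $\mathcal{T}$ is simple and each of its JGE values has geometric multiplicity at least one, then the JGE vectors of $\mathcal{T}$ contain a basis of $\mathbb{K}^R$.
   Context: $\mathbb{K}$ denotes $\mathbb{R}$ or $\mathbb{C}$. For $\mathcal{T}\in\mathbb{K}^{R\times R\times K}$ with slices $\mathbf{T}_k=\mathcal{T}(:,:,k)$: slice mix invertible means some linear combination of the $\mathbf{T}_k$ is invertible. A nonzero $\mathbf{x}$ is a JGE vector if there are $\boldsymbol{\lambda}\in\mathbb{K}^K$ and nonzero $\mathbf{y}\in\mathbb{K}^R$ with $\mathbf{T}_\ell\mathbf{x}=\lambda_\ell\mathbf{y}$ for all $\ell$; then $\mathrm{span}(\boldsymbol{\lambda})$ is a JGE value and $(\mathrm{span}(\boldsymbol{\lambda}),\mathbf{x})$ a JGE pair. $p_{\mathcal{T}}(\boldsymbol{\gamma})=\det(\sum_k\gamma_k\mathbf{T}_k)$; the algebraic multiplicity of $\mathrm{span}(\boldsymbol{\lambda})$ is the largest $m$ with $(\sum_k\lambda_k\gamma_k)^m\mid p_{\mathcal{T}}$ (so JGE values are understood to include such $\mathrm{span}(\boldsymbol\lambda)$ with positive algebraic multiplicity); the geometric multiplicity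 is the dimension of the span of JGE vectors paired with it. $\mathcal{T}$ is simple if it is slice mix invertible and $p_{\mathcal{T}}$ is a product of $R$ pairwise non-proportional linear forms. *)

(* Defs.v *)
From HB Require Import structures.
From mathcomp Require Import all_boot all_order all_algebra.
From mathcomp Require Import mpoly.
Set Implicit Arguments. Unset Strict Implicit. Unset Printing Implicit Defensive.
Import Order.TTheory GRing.Theory Num.Theory.
Local Open Scope ring_scope.

(* A tensor T in F^{R x R x K} is given by its K frontal slices T k : 'M_R.
   Vectors of F^R are column vectors 'cV_R; coefficient vectors lambda in F^K
   are row vectors 'rV_K, and span(lambda) is the row space of lambda. *)

Section JGE.
Variables (F : numFieldType) (R K : nat).
Implicit Types (T : 'I_K -> 'M[F]_R).

Definition slice_mix_invertible T : Prop :=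
  exists g : 'I_K -> F, (\sum_k g k *: T k) \in unitmx.

Definition JGE_pair T (L : 'rV[F]_K) (x : 'cV[F]_R) : Prop :=
  x != 0 /\
  exists (lam : 'rV[F]_K) (y : 'cV[F]_R),
    (lam == L)%MS /\ y != 0 /\ forall l : 'I_K, T l *m x = lam 0 l *: y.

Definition JGE_vector T (x : 'cV[F]_R) : Prop := exists L, JGE_pair T L x.

Definition linform (lam : 'rV[F]_K) : {mpoly F[K]} :=
  \sum_(k < K) (lam 0 k)%:MP * 'X_k.

Definition pT T : {mpoly F[K]} :=
  \det (\matrix_(i < R, j < R) \sum_(k < K) (T k i j)%:MP * 'X_k).

Definition alg_mult_pos T (lam : 'rV[F]_K) : Prop :=
  exists q : {mpoly F[K]}, pT T = linform lam * q.

Definition JGE_value T (L : 'rV[F]_K) : Prop :=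
  (exists x, JGE_pair T L x) \/ alg_mult_pos T L.

(* geometric multiplicity >= 1: the span of JGE vectors paired with L
   is nonzero, i.e. some JGE vector is paired with L *)
Definition geom_mult_ge1 T (L : 'rV[F]_K) : Prop :=
  exists x, JGE_pair T L x.

Definition simple_tensor T : Prop :=
  slice_mix_invertible T /\
  exists c : 'I_R -> 'rV[F]_K,
    (forall i, c i != 0) /\
    (forall i j, i != j -> ~~ (c i == c j)%MS) /\
    pT T = \prod_(i < R) linform (c i).

End JGE.

(* Main.v *)
Require Import Defs.
From HB Require Import structures.
From mathcomp Require Import all_boot all_order all_algebra.
From mathcomp Require Import mpoly.
Import Order.TTheory GRing.Theory Num.Theory.
Local Open Scope ring_scope.

Lemma eig_indep (F : fieldType) (R K l : nat) (A : 'I_K -> 'M[F]_R)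
  (x : 'I_l -> 'cV[F]_R) (mu : 'I_l -> 'I_K -> F) :
  (forall j, x j != 0) -> (forall j k, A k *m x j = mu j k *: x j) ->
  (forall i j, i != j -> ~ (forall k, mu i k = mu j k)) ->
  forall a : 'I_l -> F, \sum_j a j *: x j = 0 -> forall j, a j = 0.
Proof.
move=> xnz hA hmu.
have key : forall n (S : {set 'I_l}), (#|S| <= n)%N -> forall a : 'I_l -> F,
    \sum_(j in S) a j *: x j = 0 -> forall j, j \in S -> a j = 0.
  elim=> [|n IH] S.
    by rewrite leqn0 cards_eq0 => /eqP -> a _ j; rewrite inE.
  move=> hS a H j hj.
  have hS' : (#|S :\ j| <= n)%N.
    by move: hS; rewrite (cardsD1 j S) hj add1n ltnS.
  have others : forall i, i \in S :\ j -> a i = 0.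
    move=> i hi; have ij : i != j by move: hi; rewrite in_setD1 => /andP[].
    apply/eqP/negPn/negP => ai; apply: (hmu i j ij) => k.
    have H2 : \sum_(i0 in S :\ j) (a i0 * (mu i0 k - mu j k)) *: x i0 = 0.
      have := congr1 (mulmx (A k - (mu j k)%:M)) H.
      rewrite mulmx0 mulmx_sumr => hh; rewrite -[X in _ = X]hh.
      rewrite [RHS](bigD1 j hj) /= -scalemxAr mulmxBl mul_scalar_mx hA subrr scaler0.
      rewrite add0r; apply: eq_big => [i0|i0 _].
        by rewrite in_setD1 andbC.
      by rewrite -scalemxAr mulmxBl mul_scalar_mx hA -scalerBl scalerA.
    have := IH _ hS' _ H2 i hi => /eqP; rewrite mulf_eq0 (negPf ai) /=.
    by rewrite subr_eq0 => /eqP.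
  move: H; rewrite (bigD1 j hj) /= big1 ?addr0.
    by move/eqP; rewrite scaler_eq0 (negPf (xnz j)) orbF => /eqP.
  by move=> i /andP[iS ij]; rewrite others ?scale0r // in_setD1 ij.
move=> a H j; apply: (key l setT) => //; first by rewrite cardsT card_ord.
  by rewrite -[X in _ = X]H; apply: eq_bigl => i; rewrite inE.
Qed.

Lemma row_free_crit (F : fieldType) m n (B : 'M[F]_(m, n)) :
  (forall v : 'rV_m, v *m B = 0 -> v = 0) -> row_free B.
Proof.
move=> h; rewrite -kermx_eq0 -submx0; apply/row_subP => i.
by rewrite (h _ (sub_kermxP (row_sub i _))) sub0mx.
Qed.
Theorem lemma3p2 (F : numFieldType) (R K : nat) (T : 'I_K -> 'M[F]_R) :
  slice_mix_invertible T ->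
  (forall (l : nat) (L : 'I_l -> 'rV[F]_K) (x : 'I_l -> 'cV[F]_R),
      (forall j, JGE_pair T (L j) (x j)) ->
      (forall i j, i != j -> ~~ (L i == L j)%MS) ->
      row_free (\matrix_(j < l) (x j)^T)) /\
  (simple_tensor T ->
   (forall L : 'rV[F]_K, JGE_value T L -> geom_mult_ge1 T L) ->
   exists X : 'I_R -> 'cV[F]_R,
     (forall i, JGE_vector T (X i)) /\
     row_free (\matrix_(i < R) (X i)^T) /\ row_full (\matrix_(i < R) (X i)^T)).
Proof.
move=> [g hM]; set M := \sum_k g k *: T k in hM.
have P1 : forall (l : nat) (L : 'I_l -> 'rV[F]_K) (x : 'I_l -> 'cV[F]_R),
      (forall j, JGE_pair T (L j) (x j)) ->
      (forall i j, i != j -> ~~ (L i == L j)%MS) ->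
      row_free (\matrix_(j < l) (x j)^T).
  move=> l L x hJ hL.
  have hxnz j : x j != 0 by case: (hJ j).
  have hJ' : forall j, exists p : 'rV[F]_K * 'cV[F]_R,
      [/\ (p.1 == L j)%MS, p.2 != 0 & forall k, T k *m x j = p.1 0 k *: p.2].
    move=> j; case: (hJ j) => _ [lam [y [h1 [h2 h3]]]].
    by exists (lam, y); split.
  case/fin_all_exists: hJ' => p hp.
  pose lam j := (p j).1; pose y j := (p j).2.
  have hT j k : T k *m x j = lam j 0 k *: y j by case: (hp j) => _ _ ->.
  have hL' j : (lam j == L j)%MS by case: (hp j).
  pose c j := \sum_k g k * lam j 0 k.
  have hMx j : M *m x j = c j *: y j.
    rewrite /M mulmx_suml scaler_suml; apply: eq_bigr => k _.
    by rewrite -scalemxAl hT scalerA.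
  have hc j : c j != 0.
    apply/eqP => c0; have := hxnz j.
    by rewrite -(mulKmx hM (x j)) hMx c0 scale0r mulmx0 eqxx.
  pose A k := invmx M *m T k; pose mu j k := lam j 0 k / c j.
  have hA j k : A k *m x j = mu j k *: x j.
    have ey : invmx M *m y j = (c j)^-1 *: x j.
      by rewrite -(mulKmx hM (x j)) hMx -scalemxAr scalerA mulVf // scale1r.
    by rewrite -mulmxA hT -scalemxAr ey scalerA.
  have hmu i j : i != j -> ~ (forall k, mu i k = mu j k).
    move=> ij hk; apply: (negP (hL i j ij)).
    have e : lam i = (c i / c j) *: lam j.
      apply/rowP => k; rewrite mxE.
      have := hk k; rewrite /mu => e.
      rewrite -(divfK (hc i) (lam i 0 k)) e.
      by rewrite mulrAC [lam j 0 k * _]mulrC mulrAC.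
    have eij : (lam i :=: lam j)%MS.
      by rewrite e; apply: eqmx_scale; rewrite mulf_neq0 ?invr_eq0 ?hc.
    apply/eqmxP.
    exact: eqmx_trans (eqmx_sym (eqmxP (hL' i))) (eqmx_trans eij (eqmxP (hL' j))).
  apply: row_free_crit => v hv.
  have hs : \sum_j v 0 j *: x j = 0.
    apply: trmx_inj; rewrite trmx0 -[X in _ = X]hv mulmx_sum_row linear_sum.
    by apply: eq_bigr => j _; rewrite linearZ /= rowK.
  have h0 := @eig_indep _ _ _ _ A x mu hxnz hA hmu _ hs.
  by apply/rowP => j; rewrite mxE h0.
split; first exact: P1.
move=> [_ [c [cnz [cdist hp]]]] hgeom.
have hX' : forall i, exists X, JGE_pair T (c i) X.
  move=> i; apply: hgeom; right.
  by exists (\prod_(j < R | j != i) linform (c j)); rewrite hp (bigD1 i).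
have [X hX] := fin_all_exists hX'.
have rf := P1 R c X hX cdist.
exists X.
split; first by move=> i; rewrite /JGE_vector; exists (c i); exact: hX.
by split => //; rewrite row_full_unit -row_free_unit.
Qed.
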